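(* Let $T$ be a tree with positive edge weights rooted at the homebase $r$, in which no vertex other than $r$ has exactly one child, and let $q\ge 0$. Compute labels $\Lambda_v=(\Lambda_v.k,\Lambda_v.u_l,\Lambda_v.u_c)$ for all $v$ recursively from the leaves up: for a leaf $v$, $\Lambda_v=(1,v,\mathrm{null})$; for a non-leaf $v$, with $d_r=d(r,v)+q$, $\Lambda_v.k=\max\{1,\sum_{u\in c(v)}(\Lambda_u.k-\mathbb{1}[\Lambda_u.k=1\text{ and }d(v,\Lambda_u.u_l)\le d_r])\}$, $\Lambda_v.u_c$ is a child $u$ of $v$ maximizing $d(v,\Lambda_u.u_l)$, and $\Lambda_v.u_l=\Lambda_{\Lambda_v.u_c}.u_l$. Then build the strategy $\mathcal{S}$ (procedure CostExpl) recursively: first invoke $\Lambda_r.k$ agents at $r$; at a non-leaf vertex $v$ (with agents present at $v$), order its children as $c_1,\dots,c_l$ with $c_l=\Lambda_v.u_c$ (the others in arbitrary order), and for $i=1,\dots,l$: move $\Lambda_{c_i}.k$ agents from $v$ along $(v,c_i)$, apply the construction recursively at $c_i$, and then, if $c_i\ne\Lambda_v.u_c$ and $d(v,\Lambda_{c_i}.u_l)\le d(r,v)+q$, send the agent located at $\Lambda_{c_i}.u_l$ back to $v$. Then $\mathcal{S}$ explores $T$ and is cost-optimal.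
   Context: Exploration model: given a connected graph with positive edge weights, a homebase vertex, and invoking cost $q\ge 0$, a strategy is a sequence of moves, each either invoking a new agent (appearing at the homebase) or an agent traversing an edge incident to its current vertex. A vertex is explored when first visited; the strategy explores the graph when every vertex has been visited by some agent (agents need not return). With $k$ agents, agent $i$ traversing total distance $d_i$ (weights counted with multiplicity), the cost is $kq+\sum_i d_i$; a strategy is cost-optimal if it explores the graph with minimum cost (off-line setting). For the rooted tree: $c(v)$ is the set of children of $v$, a leaf is a non-root vertex with no children, and $d(\cdot,\cdot)$ is weighted distance. *)

(* Defs.v *)
From mathcomp Require Import all_boot all_order all_algebra.
Set Implicit Arguments. Unset Strict Implicit. Unset Printing Implicit Defensive.
Import Order.TTheory GRing.Theory Num.Theory.
Local Open Scope ring_scope.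

(* A rooted weighted tree on the finite vertex type V:
   r is the root (homebase), par v is the parent of v (par r = r),
   every vertex reaches r by iterating par, and w v (v <> r) is the
   positive weight of the edge {v, par v}. *)
Section Tree.
Variables (R : realFieldType) (V : finType) (r : V) (par : V -> V) (w : V -> R).

Definition is_rooted_tree : Prop :=
  par r = r /\ (forall v : V, iter #|V| par v = r).

Definition children (v : V) : seq V :=
  [seq u <- enum V | (u != r) && (par u == v)].

Definition is_leaf (v : V) : bool := (v != r) && (children v == [::]).

Definition adj (x y : V) : bool :=
  ((x != r) && (par x == y)) || ((y != r) && (par y == x)).

Definition ew (x y : V) : R :=
  if (x != r) && (par x == y) then w x else w y.

Fixpoint depth_aux (n : nat) (v : V) : R :=
  if n is n'.+1 then (if v == r then 0 else w v + depth_aux n' (par v)) else 0.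
Definition depth (v : V) : R := depth_aux #|V| v.

Definition is_anc (y x : V) : bool := [exists n : 'I_#|V|.+1, iter n par x == y].

(* weighted tree distance: d(x,y) = d(r,x) + d(r,y) - 2 d(r, lca(x,y)) *)
Definition dist (x y : V) : R :=
  depth x + depth y
  - 2 * \big[Num.max/0]_(z | is_anc z x && is_anc z y) depth z.

Inductive move : Type :=
| Invoke
| Step of nat & V.

Variable q : R.

(* state: positions of agents (agent i = i-th invoked), visited set, cost so far *)
Definition state := (seq V * {set V} * R)%type.

Definition step (s : state) (m : move) : option state :=
  let: (pos, vis, c) := s in
  match m with
  | Invoke => Some (rcons pos r, r |: vis, c + q)
  | Step i y =>
      if (i < size pos)%N && adj (nth r pos i) y
      then Some (set_nth r pos i y, y |: vis, c + ew (nth r pos i) y)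
      else None
  end.

Definition exec (S : seq move) : option state :=
  foldl (fun o m => if o is Some s then step s m else None)
        (Some ([::], set0, 0)) S.

Definition explores (S : seq move) : Prop :=
  exists pos c, exec S = Some (pos, [set: V], c).

Definition cost (S : seq move) : R :=
  if exec S is Some (_, _, c) then c else 0.

Definition cost_optimal (S : seq move) : Prop :=
  explores S /\ forall S', explores S' -> cost S <= cost S'.

Definition is_labeling (K : V -> nat) (UL : V -> V) (UC : V -> option V) : Prop :=
  forall v : V,
    if is_leaf v then [/\ K v = 1%N, UL v = v & UC v = None]
    else
      K v = maxn 1 (\sum_(u <- children v)
               (K u - ((K u == 1%N) && (dist v (UL u) <= dist r v + q)%R))%N)
      /\ (if children v is [::] then UC v = None else
          exists2 u, u \in children v &
            [/\ UC v = Some u,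
                (forall u', u' \in children v -> dist v (UL u') <= dist v (UL u))
              & UL v = UL u]).

Variables (K : V -> nat) (UL : V -> V) (UC : V -> option V).

Fixpoint up_moves (n : nat) (a : nat) (x v : V) : seq move :=
  if n is n'.+1 then
    (if x == v then [::] else Step a (par x) :: up_moves n' a (par x) v)
  else [::].

(* CostExpl as a relation (all "arbitrary" choices are nondeterministic):
   cost_expl v A S F : starting with the agents A all at v, procedure
   CostExpl at v produces the moves S, and F lists (agent, final vertex)
   for the agents of A.
   expl_children v cs avail S F : processing the children list cs at v,
   with agents avail currently at v. *)
Inductive cost_expl : V -> seq nat -> seq move -> seq (nat * V) -> Prop :=
| CE_leaf v A : is_leaf v -> cost_expl v A [::] [seq (a, v) | a <- A]
| CE_node v A cs S F :
    ~~ is_leaf v ->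
    perm_eq cs (children v) ->
    (cs = [::] \/ UC v = Some (last v cs)) ->
    expl_children v cs A S F ->
    cost_expl v A S F
with expl_children : V -> seq V -> seq nat -> seq move -> seq (nat * V) -> Prop :=
| EC_nil v avail : expl_children v [::] avail [::] [seq (a, v) | a <- avail]
| EC_noret v c cs avail B Sc Fc S F :
    uniq B -> size B = K c -> {subset B <= avail} ->
    cost_expl c B Sc Fc ->
    ~~ ((Some c != UC v) && (dist v (UL c) <= dist r v + q)) ->
    expl_children v cs [seq a <- avail | a \notin B] S F ->
    expl_children v (c :: cs) avail ([seq Step a c | a <- B] ++ Sc ++ S) (Fc ++ F)
| EC_ret v c cs avail B Sc Fc a S F :
    uniq B -> size B = K c -> {subset B <= avail} ->
    cost_expl c B Sc Fc ->
    (Some c != UC v) && (dist v (UL c) <= dist r v + q) ->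
    (a, UL c) \in Fc ->
    expl_children v cs (rcons [seq b <- avail | b \notin B] a) S F ->
    expl_children v (c :: cs) avail
      ([seq Step b c | b <- B] ++ Sc ++ up_moves #|V| a (UL c) v ++ S)
      ([seq p <- Fc | p.1 != a] ++ F).

Definition is_CostExpl (S : seq move) : Prop :=
  exists S0 F, cost_expl r (iota 0 (K r)) S0 F /\ S = nseq (K r) Invoke ++ S0.

End Tree.

(* Main.v *)
Require Import Defs.
From mathcomp Require Import all_boot all_order all_algebra.
From mathcomp Require Import zify ring lra.
Import Order.TTheory GRing.Theory Num.Theory.
Local Open Scope ring_scope.
Set Implicit Arguments. Unset Strict Implicit. Unset Printing Implicit Defensive.

Scheme ce_ind := Minimality for cost_expl Sort Prop
with ec_ind := Minimality for expl_children Sort Prop.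

Section Main.
Variables (R : realFieldType) (V : finType) (r : V) (par : V -> V) (w : V -> R) (q : R).
Hypothesis Htree : is_rooted_tree r par.
Hypothesis Hw : forall v, v != r -> 0 < w v.
Hypothesis Hq : 0 <= q.
Variables (K : V -> nat) (UL : V -> V) (UC : V -> option V).
Hypothesis Hlab : is_labeling r par w q K UL UC.

Local Notation anc := (is_anc par).
Local Notation ch := (children r par).
Local Notation depth := (depth r par w).
Local Notation da := (depth_aux r par w).
Local Notation dist := (dist r par w).

Lemma par_r : par r = r. Proof. by case: Htree. Qed.
Lemma iter_r n : iter n par r = r.
Proof. by elim: n => //= n ->; exact: par_r. Qed.
Lemma iter_full v : iter #|V| par v = r. Proof. by case: Htree. Qed.
Lemma iter_ge n v : (#|V| <= n)%N -> iter n par v = r.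
Proof. by move=> h; rewrite -(subnK h) iterD iter_full iter_r. Qed.

Lemma ancP y x : reflect (exists n, iter n par x = y) (anc y x).
Proof.
apply: (iffP existsP) => [[n /eqP <-]|[n Hn]]; first by exists n.
have [le|lt] := leqP n #|V|.
  have h : (n < #|V|.+1)%N by rewrite ltnS.
  by exists (Ordinal h); apply/eqP.
exists (@ord_max #|V|); apply/eqP => /=.
by rewrite iter_full -Hn iter_ge // ltnW.
Qed.

Lemma anc_par y x : anc y x = (y == x) || anc y (par x).
Proof.
apply/ancP/orP => [[[|n] Hn]|[/eqP->|/ancP[n Hn]]].
- by left; rewrite -Hn.
- by right; apply/ancP; exists n; rewrite -iterSr.
- by exists 0%N.
- by exists n.+1; rewrite iterSr.
Qed.

Lemma anc_refl x : anc x x. Proof. by apply/ancP; exists 0%N. Qed.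
Lemma anc_root x : anc r x. Proof. by apply/ancP; exists #|V|; exact: iter_full. Qed.
Lemma anc_trans a b c : anc a b -> anc b c -> anc a c.
Proof.
move=> /ancP[n Hn] /ancP[m Hm]; apply/ancP; exists (n + m)%N.
by rewrite iterD Hm.
Qed.
Lemma anc_of_r y : anc y r -> y = r.
Proof. by move=> /ancP[n <-]; rewrite iter_r. Qed.

Lemma iter_periodic p x k : iter p par x = x -> iter (k * p) par x = x.
Proof. by move=> h; elim: k => // k IH; rewrite mulSn iterD IH h. Qed.

Lemma anc_antisym x y : anc x y -> anc y x -> x = y.
Proof.
move=> /ancP[n Hn] /ancP[m Hm].
case: (posnP (n + m)) => [/eqP|pos].
  by rewrite addn_eq0 => /andP[/eqP n0 _]; rewrite -Hn n0.
have hx : iter (n + m) par x = x by rewrite iterD Hm.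
have := iter_periodic #|V| hx; rewrite iter_ge; last first.
  by rewrite -[X in (X <= _)%N]muln1 leq_mul2l pos orbT.
by move=> xr; move: Hm; rewrite -xr iter_r.
Qed.

Lemma par_neq x : x != r -> par x != x.
Proof.
move=> xr; apply/eqP => px; move/eqP: xr; apply.
have h : iter 1 par x = x by [].
by rewrite -(iter_full x) -(muln1 #|V|) iter_periodic.
Qed.

Lemma anc_chain a b x : anc a x -> anc b x -> anc a b || anc b a.
Proof.
move=> /ancP[n Hn] /ancP[m Hm].
have [le|lt] := leqP n m.
  by apply/orP; right; apply/ancP; exists (m - n)%N; rewrite -Hn -iterD subnK.
by apply/orP; left; apply/ancP; exists (n - m)%N; rewrite -Hm -iterD subnK // ltnW.
Qed.

Lemma mem_ch c v : (c \in ch v) = (c != r) && (par c == v).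
Proof. by rewrite mem_filter mem_enum andbT. Qed.
Lemma ch_uniq v : uniq (ch v). Proof. exact/filter_uniq/enum_uniq. Qed.

Lemma ch_anc v c : c \in ch v -> anc v c.
Proof. by rewrite mem_ch => /andP[_ /eqP <-]; rewrite anc_par anc_refl orbT. Qed.

Lemma ch_neq v c : c \in ch v -> c != v.
Proof.
rewrite mem_ch => /andP[cr /eqP pc]; apply/eqP => cv.
by move: (par_neq cr); rewrite pc cv eqxx.
Qed.

Lemma ch_nr v c : c \in ch v -> c != r.
Proof. by rewrite mem_ch => /andP[]. Qed.
Lemma ch_par v c : c \in ch v -> par c = v.
Proof. by rewrite mem_ch => /andP[_ /eqP]. Qed.

Lemma ch_unique v c1 c2 u : c1 \in ch v -> c2 \in ch v -> anc c1 u -> anc c2 u -> c1 = c2.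
Proof.
wlog h: c1 c2 / anc c1 c2.
  move=> H h1 h2 a1 a2; case/orP: (anc_chain a1 a2) => h.
    exact: H.
  by symmetry; apply: H.
move=> h1 h2 _ _; apply/eqP; apply: contraT => ne.
move: h; rewrite anc_par (negbTE ne) /= (ch_par h2) => a.
by move: (ch_neq h1); rewrite (anc_antisym a (ch_anc h1)) eqxx.
Qed.

Lemma ch_exists v u : anc v u -> u != v -> exists2 c, c \in ch v & anc c u.
Proof.
move=> /ancP[n]; elim: n u => [|n IH] u; first by move=> /= ->; rewrite eqxx.
rewrite iterSr => h uv.
case: (eqVneq (par u) v) => [pu|puv].
  exists u; last exact: anc_refl.
  rewrite mem_ch pu eqxx andbT.
  apply: contra uv => /eqP ur; by rewrite -pu ur par_r.
have [c c1 c2] := IH _ h puv.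
by exists c => //; rewrite anc_par c2 orbT.
Qed.

Lemma count_ch v u : count (fun c => anc c u) (ch v) = (anc v u && (u != v)).
Proof.
case: (boolP (anc v u && (u != v))) => [/andP[a ne]|H].
  have [c c1 c2] := ch_exists a ne.
  rewrite (@eq_in_count _ _ (pred1 c)); first by rewrite count_uniq_mem ?ch_uniq // c1.
  move=> c' c'in /=; apply/idP/eqP => [h|->//].
  exact: ch_unique c'in c1 h c2.
apply/eqP; rewrite eqn0Ngt -has_count; apply/hasPn => c cin; apply: contra H => ac.
rewrite (anc_trans (ch_anc cin) ac) /=; apply/eqP => uv.
by move: (ch_neq cin) ac; rewrite uv => cne ac; rewrite (anc_antisym ac (ch_anc cin)) eqxx in cne.
Qed.

Lemma sum_bool_count (T : Type) (s : seq T) (a : pred T) :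
  (\sum_(x <- s) (a x : nat))%N = count a s.
Proof. by elim: s => [|x s IH]; rewrite ?big_nil ?big_cons ?IH. Qed.

Lemma sum_strict (U : nmodType) v (F : V -> U) :
  \sum_(u | anc v u && (u != v)) F u =
  \sum_(c <- ch v) (F c + \sum_(u | anc c u && (u != c)) F u).
Proof.
have e1 : forall c, F c + \sum_(u | anc c u && (u != c)) F u = \sum_u F u *+ anc c u.
  move=> c; rewrite [RHS](bigD1 c) // anc_refl mulr1n; congr (_ + _).
  rewrite [RHS]big_mkcond [LHS]big_mkcond; apply: eq_bigr => u _.
  by rewrite mulrb; case: (anc c u); case: (u != c).
under [RHS]eq_bigr => c _ do rewrite e1.
rewrite exchange_big /= big_mkcond; apply: eq_bigr => u _.
by rewrite sumrMnr sum_bool_count count_ch mulrb.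
Qed.

Lemma count_strict v (s : seq V) :
  count (anc v) s = (count (pred1 v) s + \sum_(c <- ch v) count (anc c) s)%N.
Proof.
elim: s => [|x s IH] /=; first by rewrite big1.
rewrite big_split /= IH sum_bool_count count_ch.
case: (eqVneq x v) => [->|ne].
  by rewrite anc_refl /=; lia.
by case: (anc v x) => /=; lia.
Qed.

Lemma tree_ind (P : V -> Prop) :
  (forall v, (forall c, c \in ch v -> P c) -> P v) -> forall v, P v.
Proof.
move=> H v.
suff: forall n v, (#|[set x | anc v x]| <= n)%N -> P v by apply; exact: leqnn.
elim=> [|n IH] u hu.
  move: hu; rewrite leqn0 => /eqP/cards0_eq/setP/(_ u).
  by rewrite inE anc_refl inE.
apply: H => c cin; apply: IH; rewrite -ltnS; apply: leq_trans hu; apply: proper_card.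
apply/properP; split.
  apply/subsetP => x; rewrite !inE; exact: anc_trans (ch_anc cin).
exists u; first by rewrite inE anc_refl.
rewrite inE; apply/negP => a; move: (ch_neq cin).
by rewrite (anc_antisym a (ch_anc cin)) eqxx.
Qed.

Lemma daS n v : da n.+1 v = if v == r then 0 else w v + da n (par v).
Proof. by []. Qed.

Lemma da_stable n v : iter n par v = r -> da n.+1 v = da n v.
Proof.
elim: n v => [|n IH] v h.
  by rewrite /= in h; rewrite h /= eqxx.
rewrite iterSr in h.
by rewrite daS [da n.+1 v]daS IH.
Qed.

Lemma da_ge n m v : iter n par v = r -> (n <= m)%N -> da m v = da n v.
Proof.
move=> h; elim: m => [|m IH]; first by rewrite leqn0 => /eqP->.
rewrite leq_eqVlt => /orP[/eqP <-//|]; rewrite ltnS => le.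
rewrite da_stable ?IH //.
by rewrite -(subnK le) iterD h iter_r.
Qed.

Lemma card_pos : (0 < #|V|)%N.
Proof. by apply/card_gt0P; exists r. Qed.

Lemma depthE v : depth v = if v == r then 0 else w v + depth (par v).
Proof.
rewrite /Defs.depth; move: (iter_full v) (iter_full (par v)).
case: #|V| card_pos => [//|n] _ h1 h2.
rewrite daS; case: eqP => // _; congr (_ + _).
rewrite (@da_ge n n.+1) //.
by rewrite -iterSr.
Qed.

Lemma depth_r : depth r = 0. Proof. by rewrite depthE eqxx. Qed.

Lemma depth_par c : c != r -> depth c = w c + depth (par c).
Proof. by move=> cr; rewrite depthE (negbTE cr). Qed.

Lemma da_ge0 n v : 0 <= da n v.
Proof.
elim: n v => [|n IH] v //=; case: eqP => // /eqP vr.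
by rewrite addr_ge0 // ltW // Hw.
Qed.

Lemma depth_ge0 v : 0 <= depth v. Proof. exact: da_ge0. Qed.

Lemma depth_par_le v : depth (par v) <= depth v.
Proof.
case: (eqVneq v r) => [->|vr]; first by rewrite par_r.
by rewrite (depth_par vr) lerDr ltW // Hw.
Qed.

Lemma depth_anc z v : anc z v -> depth z <= depth v.
Proof.
move=> /ancP[n]; elim: n v => [|n IH] v; first by move=> /= ->.
rewrite iterSr => /IH h; exact: le_trans h (depth_par_le v).
Qed.

Lemma dist_anc v y : anc v y -> dist v y = depth y - depth v.
Proof.
move=> a; rewrite /Defs.dist.
have -> : \big[Num.max/0]_(z | anc z v && anc z y) depth z = depth v.
  apply/le_anti/andP; split.
    apply: bigmax_le; first exact: depth_ge0.
    by move=> z /andP[az _]; exact: depth_anc.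
  by apply: le_bigmax_cond; rewrite anc_refl a.
by rewrite mulr2n mulrDl mul1r; lra.
Qed.

Lemma dist_r v : dist r v = depth v.
Proof. by rewrite dist_anc ?depth_r ?subr0 // anc_root. Qed.

Definition stepo (o : option (state R V)) (m : move V) :=
  if o is Some s then step r par w q s m else None.
Definition run o (S : seq (move V)) := foldl stepo o S.

Lemma exec_run S : exec r par w q S = run (Some ([::], set0, 0)) S.
Proof. by []. Qed.

Lemma run_cat o S1 S2 : run o (S1 ++ S2) = run (run o S1) S2.
Proof. exact: foldl_cat. Qed.

Lemma run_cons o m S : run o (m :: S) = run (stepo o m) S.
Proof. by []. Qed.

Lemma run_None S : run None S = None.
Proof. by elim: S. Qed.

Lemma no_2cycle x y : y != r -> par y = x -> par x = y -> False.
Proof.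
move=> yr pyx pxy.
have a1 : anc x y by rewrite anc_par pyx anc_refl orbT.
have a2 : anc y x by rewrite anc_par pxy anc_refl orbT.
have xy := anc_antisym a1 a2.
by move: (par_neq yr); rewrite pyx xy eqxx.
Qed.

Lemma step_down pos vis c a y :
  (a < size pos)%N -> y != r -> par y = nth r pos a ->
  step r par w q (pos, vis, c) (Step a y) = Some (set_nth r pos a y, y |: vis, c + w y).
Proof.
move=> asz yr py; rewrite /step asz /adj yr py eqxx orbT /=.
rewrite /ew; case: andP => // [[_ /eqP pxy]].
by case: (no_2cycle yr py pxy).
Qed.

Lemma step_up pos vis c a :
  (a < size pos)%N -> nth r pos a != r ->
  step r par w q (pos, vis, c) (Step a (par (nth r pos a))) =
  Some (set_nth r pos a (par (nth r pos a)), par (nth r pos a) |: vis, c + w (nth r pos a)).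
Proof.
move=> asz xr; rewrite /step asz /adj xr eqxx /= /ew xr eqxx /=.
done.
Qed.

Lemma run_up n a v : forall x pos vis c0,
  (exists2 k, (k <= n)%N & iter k par x = v) ->
  (a < size pos)%N -> nth r pos a = x ->
  exists pos' vis', run (Some (pos, vis, c0)) (up_moves par n a x v) = Some (pos', vis', c0 + (depth x - depth v))
    /\ [/\ size pos' = size pos, (forall b, nth r pos' b = if b == a then v else nth r pos b) & vis \subset vis'].
Proof.
elim: n => [|n IH] x pos vis c0 [k kn hk] asz hx.
  move: kn; rewrite leqn0 => /eqP k0; move: hk; rewrite k0 /= => xv.
  exists pos, vis; split; first by rewrite xv subrr addr0.
  split => // b; case: eqP => // ->; by rewrite hx xv.
have -> : up_moves par n.+1 a x v = if x == v then [::] else Step a (par x) :: up_moves par n a (par x) v by [].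
case: eqP => [xv|/eqP xv].
  exists pos, vis; split; first by rewrite xv subrr addr0.
  split => // b; case: eqP => // ->; by rewrite hx xv.
have xr : x != r.
  apply: contra xv => /eqP xr; move: hk; by rewrite xr iter_r => ->.
case: k kn hk => [|k] kn hk; first by move: xv; rewrite -hk eqxx.
rewrite run_cons /stepo -hx step_up ?hx //.
have asz' : (a < size (set_nth r pos a (par x)))%N by rewrite size_set_nth leq_max asz orbT.
have hk' : iter k par (par x) = v by rewrite -iterSr.
have hn' : nth r (set_nth r pos a (par x)) a = par x by rewrite nth_set_nth /= eqxx.
have [pos' [vis' [e [s1 s2 s3]]]] := IH (par x) (set_nth r pos a (par x)) (par x |: vis) (c0 + w x)
  (ex_intro2 _ _ k kn hk') asz' hn'.
exists pos', vis'; split.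
  rewrite e; congr Some; congr (_, _, _).
  by rewrite (depth_par xr); ring.
split.
- by rewrite s1 size_set_nth; apply/maxn_idPr.
- by move=> b; rewrite s2 nth_set_nth /=; case: eqP.
- by apply: subset_trans s3; apply: subsetUr.
Qed.

Definition cnd v c := (dist v (UL c) <= dist r v + q).
Definition ret v c := (Some c != UC v) && cnd v c.
Definition dlt v c := (K c == 1%N) && cnd v c.
Definition hh c := (K c)%:R * w c + (if ret (par c) c then dist (par c) (UL c) else 0).
Definition GG v := \sum_(u | anc v u && (u != v)) hh u.
Definition WW v := \sum_(u | anc v u && (u != v)) w u.
Definition DD v := depth v + q.

Lemma Klab v : K v = maxn 1 (\sum_(c <- ch v) (K c - dlt v c))%N.
Proof.
move: (Hlab v); rewrite /is_leaf; case: ifP => [/andP[_ /eqP ->] [-> _ _]|_ [-> _]] //.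
by rewrite big_nil.
Qed.

Lemma Kpos v : (0 < K v)%N.
Proof. by rewrite Klab leq_max. Qed.

Lemma UCspec v : ch v != [::] -> exists2 u, u \in ch v &
  [/\ UC v = Some u, forall u', u' \in ch v -> dist v (UL u') <= dist v (UL u) & UL v = UL u].
Proof.
move=> ne; move: (Hlab v); rewrite /is_leaf.
case: (ch v) ne => [//|c cs] _; rewrite andbF => -[_ H]; exact: H.
Qed.

Lemma leafUL v : ch v = [::] -> v != r -> UL v = v /\ K v = 1%N.
Proof.
move=> e vr; move: (Hlab v); rewrite /is_leaf e vr eqxx /= => -[-> -> _]; done.
Qed.

Lemma ULsub v : v != r -> anc v (UL v).
Proof.
elim/tree_ind: v => v IH vr.
case: (eqVneq (ch v) [::]) => [e|ne].
  by rewrite (leafUL e vr).1 anc_refl.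
have [u uin [_ _ ->]] := UCspec ne.
exact: anc_trans (ch_anc uin) (IH u uin (ch_nr uin)).
Qed.

Lemma dUL v c : c \in ch v -> dist v (UL c) = depth (UL c) - depth v.
Proof.
move=> cin; apply: dist_anc => //.
exact: anc_trans (ch_anc cin) (ULsub (ch_nr cin)).
Qed.

Lemma cndE v c : c \in ch v -> cnd v c = (depth (UL c) - depth v <= DD v).
Proof. by move=> cin; rewrite /cnd dUL // dist_r. Qed.

Lemma DD_ch v c : c \in ch v -> DD c = DD v + w c.
Proof. by move=> cin; rewrite /DD (depth_par (ch_nr cin)) (ch_par cin); ring. Qed.

Lemma DD_ge0 v : 0 <= DD v.
Proof. by rewrite /DD addr_ge0 // depth_ge0. Qed.

Lemma w_ge0 v c : c \in ch v -> 0 <= w c.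
Proof. by move=> cin; rewrite ltW // Hw // (ch_nr cin). Qed.

Lemma w_gt0 v c : c \in ch v -> 0 < w c.
Proof. by move=> cin; rewrite Hw // (ch_nr cin). Qed.

Lemma sum_pos_term (s : seq V) (F : V -> nat) :
  (0 < \sum_(x <- s) F x)%N -> exists2 x, x \in s & (0 < F x)%N.
Proof.
elim: s => [|x s IH]; first by rewrite big_nil.
rewrite big_cons; case: (posnP (F x)) => [->|p] /= h.
  by have [y ys yp] := IH h; exists y => //; rewrite inE ys orbT.
by exists x => //; rewrite inE eqxx.
Qed.

Lemma Lfar c : c != r -> (1 < K c)%N -> DD c < depth (UL c) - depth c.
Proof.
elim/tree_ind: c => c IH cr K2.
case: (eqVneq (ch c) [::]) => [e|ne].
  by move: K2; rewrite (leafUL e cr).2.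
have [x xin xpos] : exists2 x, x \in ch c & (0 < K x - dlt c x)%N.
  by apply: sum_pos_term; move: K2; rewrite Klab; lia.
have [u0 u0in [_ umax ->]] := UCspec ne.
have hx : DD c < depth (UL x) - depth c.
  case: (ltnP 1 (K x)) => [K2x|K1x].
    have := IH x xin (ch_nr xin) K2x.
    rewrite (DD_ch xin) (depth_par (ch_nr xin)) (ch_par xin).
    have := w_ge0 xin; lra.
  have Kx1 : K x = 1%N by have := Kpos x; lia.
  move: xpos; rewrite /dlt Kx1 eqxx /= (cndE xin).
  by case: lerP.
apply: (lt_le_trans hx).
by have := umax x xin; rewrite !dUL.
Qed.


Lemma GG_rec v : GG v = \sum_(c <- ch v) (hh c + GG c).
Proof. by rewrite /GG sum_strict. Qed.

Lemma WW_rec v : WW v = \sum_(c <- ch v) (w c + WW c).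
Proof. by rewrite /WW sum_strict. Qed.

Lemma hh_ch v c : c \in ch v ->
  hh c = (K c)%:R * w c + (if ret v c then depth (UL c) - depth v else 0).
Proof. by move=> cin; rewrite /hh (ch_par cin) dUL. Qed.

Lemma Kfar v c : c \in ch v -> (1 < K c)%N -> DD v < depth (UL c) - depth v.
Proof.
move=> cin K2; have := Lfar (ch_nr cin) K2.
rewrite (DD_ch cin) (depth_par (ch_nr cin)) (ch_par cin).
have := w_ge0 cin; lra.
Qed.

Lemma ndlt_far v c : c \in ch v -> ~~ dlt v c -> DD v < depth (UL c) - depth v.
Proof.
move=> cin; rewrite /dlt negb_and => /orP[K1|].
  apply: Kfar cin _; have := Kpos c; move: K1; lia.
by rewrite (cndE cin) -ltNge.
Qed.

Lemma ret_dlt v c : c \in ch v -> ret v c -> dlt v c.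
Proof.
move=> cin /andP[_ cn]; apply: contraT => /(ndlt_far cin).
by rewrite (cndE cin) in cn; rewrite ltNge cn.
Qed.

Lemma sum_ind (s : seq V) u0 (a : R) : uniq s -> u0 \in s ->
  \sum_(x <- s) (x == u0)%:R * a = a.
Proof.
move=> us u0s; rewrite (bigD1_seq u0) //= eqxx mul1r big1 ?addr0 // => x /negbTE ->.
by rewrite mul0r.
Qed.

Lemma sum_zero_terms (s : seq V) (F : V -> nat) :
  (\sum_(x <- s) F x)%N = 0%N -> forall x, x \in s -> F x = 0%N.
Proof.
elim: s => [//|y s IH]; rewrite big_cons => /eqP; rewrite addn_eq0 => /andP[/eqP Fy /eqP h] x.
by rewrite inE => /orP[/eqP->//|]; exact: IH h x.
Qed.

Lemma ler_sum_in (s : seq V) (F G : V -> R) :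
  (forall x, x \in s -> F x <= G x) -> \sum_(x <- s) F x <= \sum_(x <- s) G x.
Proof. by move=> h; rewrite big_seq [X in _ <= X]big_seq; apply: ler_sum. Qed.

Lemma U_term c u0 x : x \in ch c -> UC c = Some u0 ->
  GG x + ((K x)%:R - 1) * DD x <= 2 * WW x - (depth (UL x) - depth x) ->
  hh x + GG x <= 2 * (w x + WW x) - ((K x - dlt c x)%N%:R * DD c +
     (x == u0)%:R * ((depth (UL u0) - depth c) - (1 - (dlt c u0)%:R) * DD c)).
Proof.
move=> xin UCc IHx.
rewrite (DD_ch xin) (depth_par (ch_nr xin)) (ch_par xin) in IHx.
rewrite (hh_ch xin).
have Kx := Kpos x; have wx := w_ge0 xin; have D0 := DD_ge0 c.
have dle : (dlt c x <= K x)%N by case: (dlt c x).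
case: (eqVneq x u0) => [exu|nxu].
  subst x; rewrite /ret UCc eqxx /= natrB //.
  lra.
rewrite mul0r addr0.
have -> : ret c x = cnd c x by rewrite /ret UCc /=; case: eqP => // -[/eqP]; rewrite (negbTE nxu).
case dx: (dlt c x).
  move: (dx); rewrite /dlt => /andP[/eqP K1 ->].
  rewrite K1 subnn /= mul0r subr0 in IHx *.
  lra.
have far := ndlt_far xin (negbT dx).
have ncnd : cnd c x = false by rewrite (cndE xin) leNgt far.
rewrite ncnd /= subn0.
lra.
Qed.

Lemma Ub c : c != r -> GG c + ((K c)%:R - 1) * DD c <= 2 * WW c - (depth (UL c) - depth c).
Proof.
elim/tree_ind: c => c IH cr.
case: (eqVneq (ch c) [::]) => [e|ne].
  have [-> ->] := leafUL e cr.
  rewrite GG_rec WW_rec e !big_nil.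
  lra.
have [u0 u0in [UCu _ ULu]] := UCspec ne.
rewrite GG_rec WW_rec ULu.
set S := (\sum_(x <- ch c) (K x - dlt c x))%N.
have H1 : \sum_(x <- ch c) (hh x + GG x) <= \sum_(x <- ch c) (2 * (w x + WW x) -
     ((K x - dlt c x)%N%:R * DD c +
     (x == u0)%:R * ((depth (UL u0) - depth c) - (1 - (dlt c u0)%:R) * DD c))).
  apply: ler_sum_in => x xin; apply: (U_term xin UCu); exact: IH x xin (ch_nr xin).
have E : \sum_(x <- ch c) (2 * (w x + WW x) -
     ((K x - dlt c x)%N%:R * DD c +
     (x == u0)%:R * ((depth (UL u0) - depth c) - (1 - (dlt c u0)%:R) * DD c))) =
  2 * \sum_(x <- ch c) (w x + WW x) - (S%:R * DD c + ((depth (UL u0) - depth c) - (1 - (dlt c u0)%:R) * DD c)).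
  by rewrite sumrB big_split /= sum_ind ?ch_uniq // -mulr_suml -natr_sum -mulr_sumr.
rewrite E in H1.
have HK : ((K c)%:R - 1) * DD c <= S%:R * DD c - (1 - (dlt c u0)%:R) * DD c.
  have D0 := DD_ge0 c.
  rewrite Klab -/S; case: (posnP S) => [S0|Spos].
    have h0 := sum_zero_terms S0 u0in; have k0 := Kpos u0.
    have dt : dlt c u0 by move: h0 k0; case: (dlt c u0) => //=; lia.
    rewrite S0 dt; have -> : maxn 1 0 = 1%N by [].
    rewrite /=; lra.
  rewrite (maxn_idPr Spos).
  by case: (dlt c u0) => /=; lra.
lra.
Qed.


Definition Nc (pos : seq V) u := count (anc u) pos.
Definition fN (n : nat) : R := if (0 < n)%N then n%:R else 2.
Definition inner pos v := \sum_(u | anc v u && (u != v)) w u * fN (Nc pos u).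

Lemma inner_rec pos v : inner pos v = \sum_(c <- ch v) (w c * fN (Nc pos c) + inner pos c).
Proof. by rewrite /inner sum_strict. Qed.

Lemma N_rec pos v : Nc pos v = (count (pred1 v) pos + \sum_(c <- ch v) Nc pos c)%N.
Proof. exact: count_strict. Qed.

Lemma N_mono pos c u : anc c u -> (Nc pos u <= Nc pos c)%N.
Proof. by move=> a; apply: sub_count => x; exact: anc_trans. Qed.

Lemma inner_zero pos c : Nc pos c = 0%N -> inner pos c = 2 * WW c.
Proof.
move=> h; rewrite /inner /WW mulr_sumr; apply: eq_bigr => u /andP[a _].
have : (Nc pos u <= 0)%N by rewrite -h; exact: N_mono.
by rewrite leqn0 /fN => /eqP ->; rewrite mulrC.
Qed.

Section Child.
Variables (pos : seq V) (v c : V).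
Hypothesis cin : c \in ch v.
Let dc := depth (UL c) - depth v.
Let Y := w c * fN (Nc pos c) + inner pos c + (Nc pos c)%:R * DD v.
Let g := hh c + GG c.

Lemma dc_ge0 : 0 <= dc.
Proof.
rewrite /dc subr_ge0; apply: depth_anc.
exact: anc_trans (ch_anc cin) (ULsub (ch_nr cin)).
Qed.

Lemma PCa : (0 < Nc pos c)%N ->
  GG c + (K c)%:R * DD c <= inner pos c + (Nc pos c)%:R * DD c ->
  g + (K c)%:R * DD v - (if ret v c then dc else 0) <= Y.
Proof.
move=> Np IHc; rewrite /Y /g (hh_ch cin) /fN Np.
rewrite (DD_ch cin) in IHc.
case: (ret v c) => /=; rewrite /dc; lra.
Qed.

Lemma PCb : Nc pos c = 0%N ->
  g + ((K c)%:R - 1) * DD v + (if ret v c then 0 else dc) <= Y.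
Proof.
move=> N0; rewrite /Y /g (hh_ch cin) /fN N0 /= (inner_zero N0).
have := Ub (ch_nr cin); rewrite (DD_ch cin) (depth_par (ch_nr cin)) (ch_par cin).
case: (ret v c) => /=; rewrite /dc; lra.
Qed.

Lemma PC1 : ((0 < Nc pos c)%N ->
  GG c + (K c)%:R * DD c <= inner pos c + (Nc pos c)%:R * DD c) ->
  g + (K c - dlt v c)%N%:R * DD v <= Y.
Proof.
move=> IHc; have D0 := DD_ge0 v; have d0 := dc_ge0; have Kc := Kpos c.
have dle : (dlt v c <= K c)%N by case: (dlt v c).
rewrite natrB //.
case: (posnP (Nc pos c)) => [N0|Np].
  have := PCb N0; case dl: (dlt v c).
    by case: (ret v c) => /=; lra.
  have far := ndlt_far cin (negbT dl).
  have -> : ret v c = false by apply: contraFF dl; exact: ret_dlt.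
  rewrite /= -/dc in far *; lra.
have := PCa Np (IHc Np); case rt: (ret v c).
  have dl := ret_dlt cin rt; rewrite dl.
  have : cnd v c by case/andP: rt.
  rewrite (cndE cin) -/dc /=; lra.
by case: (dlt v c) => /=; lra.
Qed.

End Child.

Lemma natb1 : (true : nat)%:R = 1 :> R. Proof. by []. Qed.
Lemma natb0 : (false : nat)%:R = 0 :> R. Proof. by []. Qed.

Lemma sum_ind2 (s : seq V) (g : V -> R) c0 u0 a b : uniq s -> c0 \in s -> u0 \in s ->
  \sum_(x <- s) (g x + (x == c0)%:R * a + (x == u0)%:R * b) = \sum_(x <- s) g x + a + b.
Proof. by move=> us c0s u0s; rewrite !big_split /= !sum_ind. Qed.

Lemma Lb pos v : (0 < Nc pos v)%N ->
  GG v + (K v)%:R * DD v <= inner pos v + (Nc pos v)%:R * DD v.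
Proof.
elim/tree_ind: v => v IH Npos.
set m := count (pred1 v) pos.
have E : inner pos v + (Nc pos v)%:R * DD v =
  \sum_(c <- ch v) (w c * fN (Nc pos c) + inner pos c + (Nc pos c)%:R * DD v) + m%:R * DD v.
  rewrite inner_rec [Nc pos v]N_rec natrD natr_sum mulrDl mulr_suml big_split /=.
  rewrite -/m !big_split /=; ring.
rewrite E GG_rec.
set S := (\sum_(c <- ch v) (K c - dlt v c))%N.
have H1 : \sum_(c <- ch v) (hh c + GG c) + S%:R * DD v <=
    \sum_(c <- ch v) (w c * fN (Nc pos c) + inner pos c + (Nc pos c)%:R * DD v).
  rewrite /S natr_sum mulr_suml -big_split /=.
  apply: ler_sum_in => c cin; apply: PC1 => //; exact: IH.
have D0 := DD_ge0 v.
have m0 : 0 <= m%:R * DD v :> R by rewrite mulr_ge0 // ler0n.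
have Nsum : (0 < m + \sum_(c <- ch v) Nc pos c)%N by rewrite /m -(N_rec pos v).
rewrite Klab -/S.
case: (posnP S) => [S0|Spos]; last first.
  by rewrite (maxn_idPr Spos); clearbody S m; lra.
have -> : maxn 1 S = 1%N by rewrite S0.
have allK : forall x, x \in ch v -> K x = 1%N /\ dlt v x.
  move=> x xin; have := sum_zero_terms S0 xin; have := Kpos x.
  by case: (dlt v x) => /= h1 h2; split => //; lia.
rewrite S0 in H1.
case: (posnP m) => [m00|mpos]; last first.
  have : 1 <= m%:R :> R by rewrite ler1n.
  move=> h; have : DD v <= m%:R * DD v by rewrite ler_peMl.
  by clearbody S m; lra.
rewrite m00 add0n in Nsum.
have [c0 c0in Nc0] := sum_pos_term Nsum.
have ne : ch v != [::] by apply/eqP => e; rewrite e in c0in.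
have [u0 u0in [UCu umax _]] := UCspec ne.
have hmax : depth (UL c0) - depth v <= depth (UL u0) - depth v.
  by have := umax c0 c0in; rewrite !dUL.
have dule : depth (UL u0) - depth v <= DD v.
  have [_ dl] := allK u0 u0in; move: dl; rewrite /dlt (cndE u0in) => /andP[_ ->] //.
have retu : ret v u0 = false by rewrite /ret UCu eqxx.
case: (eqVneq c0 u0) => [e|ne0].
  subst c0.
  have Hx : forall x, x \in ch v ->
      hh x + GG x + (x == u0)%:R * DD v
      <= w x * fN (Nc pos x) + inner pos x + (Nc pos x)%:R * DD v.
    move=> x xin; case: (eqVneq x u0) => [exu|nxu].
      subst x; have [K1 _] := allK u0 u0in.
      have := PCa u0in Nc0 (IH u0 u0in Nc0); rewrite K1 retu natb1 /=; lra.
    rewrite natb0 mul0r addr0.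
    have [K1 dl] := allK x xin.
    by have := PC1 xin (IH x xin); rewrite K1 dl subnn mul0r addr0.
  have := ler_sum_in Hx; rewrite big_split /= sum_ind ?ch_uniq //.
  by clearbody S m; lra.
have Hx : forall x, x \in ch v ->
    hh x + GG x + (x == c0)%:R * (DD v - (depth (UL c0) - depth v))
      + (x == u0)%:R * (depth (UL u0) - depth v)
    <= w x * fN (Nc pos x) + inner pos x + (Nc pos x)%:R * DD v.
  move=> x xin.
  case: (eqVneq x c0) => [exc|nxc].
    subst x; have [K1 _] := allK c0 c0in.
    rewrite (negbTE ne0) natb0 mul0r addr0 natb1 mul1r.
    have := PCa c0in Nc0 (IH c0 c0in Nc0); have := dc_ge0 c0in; rewrite K1.
    by case: (ret v c0) => /=; lra.
  rewrite natb0 mul0r addr0.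
  case: (eqVneq x u0) => [exu|nxu].
    subst x; have [K1 _] := allK u0 u0in.
    rewrite natb1 mul1r.
    case: (posnP (Nc pos u0)) => [N0|Np].
      by have := PCb u0in N0; rewrite K1 retu /=; lra.
    by have := PCa u0in Np (IH u0 u0in Np); rewrite K1 retu /=; lra.
  rewrite natb0 mul0r addr0.
  have [K1 dl] := allK x xin.
  by have := PC1 xin (IH x xin); rewrite K1 dl subnn mul0r addr0.
have := ler_sum_in Hx; rewrite sum_ind2 ?ch_uniq //.
by clearbody S m; lra.
Qed.



Definition Fv pos (vis : {set V}) u : R :=
  if (0 < Nc pos u)%N then (Nc pos u)%:R else if u \in vis then 2 else 0.

Definition Inv (s : state R V) : Prop :=
  let: (pos, vis, c) := s in
  [/\ forall i, (i < size pos)%N -> nth r pos i \in vis,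
      forall x, x \in vis -> par x \in vis,
      size pos = 0%N -> vis = set0
    & (size pos)%:R * q + \sum_(u | u != r) w u * Fv pos vis u <= c].

Lemma count_set_nth (T : eqType) (p : pred T) (s : seq T) x0 i y : (i < size s)%N ->
  (count p (set_nth x0 s i y) + p (nth x0 s i) = count p s + p y)%N.
Proof.
elim: s i => [//|a s IH] [|i] /= h.
  by case: (p a); case: (p y) => /=; lia.
by have := IH i h; lia.
Qed.

Lemma anc_par_self x : x != r -> anc x (par x) = false.
Proof.
move=> xr; apply/negbTE/negP => a.
have a2 : anc (par x) x by rewrite anc_par anc_refl orbT.
by move: (par_neq xr); rewrite (anc_antisym a2 a) eqxx.
Qed.

Lemma sum_change (F F' : V -> R) z : z != r ->
  (forall u, u != r -> u != z -> F' u = F u) -> F' z <= F z + 1 ->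
  \sum_(u | u != r) w u * F' u <= \sum_(u | u != r) w u * F u + w z.
Proof.
move=> zr H hz; rewrite (bigD1 z) // [X in _ <= X + _](bigD1 z) //=.
rewrite (eq_bigr (fun u => w u * F u)); last by move=> u /andP[ur uz]; rewrite H.
have := ler_wpM2l (ltW (Hw zr)) hz; lra.
Qed.

Lemma Inv0 : Inv ([::], set0, 0).
Proof.
split => //; first by move=> x; rewrite inE.
rewrite mul0r add0r big1 // => u _; rewrite /Fv /Nc /= inE mulr0 //.
Qed.

Lemma inv_step s m s' : Inv s -> step r par w q s m = Some s' -> Inv s'.
Proof.
case: s => [[pos vis] c] [Hpos Hcl H0 Hc].
case: m => [|i y] /=.
  move=> [<-]; split.
  - move=> j; rewrite size_rcons ltnS nth_rcons => _.
    case: ltnP => [jl|_]; first by rewrite !inE Hpos ?orbT.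
    by case: eqP => _; rewrite setU11.
  - move=> x; rewrite !inE => /orP[/eqP->|xv]; first by rewrite par_r eqxx.
    by rewrite Hcl ?orbT.
  - by rewrite size_rcons.
  - rewrite size_rcons -addn1 natrD mulrDl mul1r.
    rewrite (eq_bigr (fun u => w u * Fv pos vis u)); first by lra.
    move=> u ur; congr (_ * _); rewrite /Fv /Nc -cats1 count_cat /=.
    have -> : anc u r = false by apply/negbTE/negP => /anc_of_r /eqP; rewrite (negbTE ur).
    by rewrite !inE (negbTE ur) /= !addn0.
case: ifP => // /andP[il ad] [<-].
set x := nth r pos i in ad *.
have xv : x \in vis by exact: Hpos.
have szE : size (set_nth r pos i y) = size pos by rewrite size_set_nth; apply/maxn_idPr.
have nthE : forall j, nth r (set_nth r pos i y) j = if j == i then y else nth r pos j.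
  by move=> j; rewrite nth_set_nth.
have cntE : forall u, (Nc (set_nth r pos i y) u + anc u x = Nc pos u + anc u y)%N.
  by move=> u; rewrite /Nc count_set_nth.
have Npos_x : (0 < Nc pos x)%N.
  rewrite /Nc -has_count; apply/hasP; exists x; last exact: anc_refl.
  by rewrite /x mem_nth.
split.
- move=> j; rewrite szE nthE => jl; case: eqP => _; first by rewrite setU11.
  by rewrite !inE Hpos ?orbT.
- move=> z; rewrite !inE => /orP[/eqP->|zv]; last by rewrite Hcl ?orbT.
  move: ad; rewrite /adj => /orP[/andP[xr /eqP <-]|/andP[yr /eqP ->]].
    by rewrite !Hcl ?orbT.
  by rewrite xv orbT.
- by rewrite szE => /size0nil pe; move: il; rewrite pe.
rewrite szE.
move: ad; rewrite /adj /ew; case: ifP => [/andP[xr /eqP pxy] _|nA /orP[//|/andP[yr /eqP pyx]]].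
  have yv : y \in vis by rewrite -pxy Hcl.
  apply: le_trans (_ : (size pos)%:R * q + (\sum_(u | u != r) w u * Fv pos vis u + w x) <= _).
    rewrite lerD2l; apply: (sum_change xr).
      move=> u ur ux; rewrite /Fv.
      have : Nc (set_nth r pos i y) u = Nc pos u.
        have := cntE u; rewrite -pxy [anc u x]anc_par (negbTE ux) /=; lia.
      move=> ->; rewrite !inE; case: eqP => // ->; by rewrite yv.
    have ax : anc x y = false by rewrite -pxy; exact: anc_par_self xr.
    have := cntE x; rewrite anc_refl ax addn0 addn1 => e.
    rewrite /Fv -e ltn0Sn mulrSr.
    case: ifP => _; first lra.
    by have := ler0n R (Nc (set_nth r pos i y) x); case: ifP => _; lra.
  lra.
apply: le_trans (_ : (size pos)%:R * q + (\sum_(u | u != r) w u * Fv pos vis u + w y) <= _).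
  rewrite lerD2l; apply: (sum_change yr).
    move=> u ur uy; rewrite /Fv.
    have : Nc (set_nth r pos i y) u = Nc pos u.
      have := cntE u; rewrite [anc u y]anc_par (negbTE uy) pyx /=; lia.
    by move=> ->; rewrite !inE (negbTE uy).
  have ay : anc y x = false by rewrite -pyx; exact: anc_par_self yr.
  have := cntE y; rewrite anc_refl ay addn0 addn1 => e.
  rewrite /Fv e ltn0Sn mulrSr.
  case: ifP => [_|h]; first lra.
  move: h; rewrite lt0n => /negbFE/eqP N0; rewrite N0.
  by case: ifP => _; lra.
lra.
Qed.

Lemma inv_run S s s' : Inv s -> run (Some s) S = Some s' -> Inv s'.
Proof.
elim: S s => [|m S IH] s hs; first by rewrite /run /= => -[<-].
rewrite run_cons /stepo; case e: (step r par w q s m) => [s1|]; last by rewrite run_None.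
exact: IH (inv_step hs e).
Qed.


Lemma run_down (B : seq nat) v c : c != r -> par c = v -> forall pos vis c0, uniq B ->
  (forall a, a \in B -> (a < size pos)%N /\ nth r pos a = v) ->
  exists pos' vis', run (Some (pos, vis, c0)) [seq Step a c | a <- B] =
     Some (pos', vis', c0 + (size B)%:R * w c) /\
  [/\ size pos' = size pos, (forall a, nth r pos' a = if a \in B then c else nth r pos a),
      vis \subset vis' & B != [::] -> c \in vis'].
Proof.
move=> cr pc; elim: B => [|a B IH] pos vis c0 uB HB.
  exists pos, vis; split; first by rewrite mul0r addr0.
  by split.
move: uB; rewrite cons_uniq => /andP[aB uB].
have [asz anth] := HB a (mem_head _ _).
set pos1 := set_nth r pos a c.
have sz1 : size pos1 = size pos by rewrite size_set_nth; apply/maxn_idPr.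
have HB1 : forall b, b \in B -> (b < size pos1)%N /\ nth r pos1 b = v.
  move=> b bB; have bB' : b \in a :: B by rewrite inE bB orbT.
  have [bs bn] := HB b bB'.
  rewrite sz1 nth_set_nth /=; case: eqP => [eba|_]; last by split.
  by move: aB; rewrite -eba bB.
have [pos' [vis' [e [s1 s2 s3 s4]]]] := IH pos1 (c |: vis) (c0 + w c) uB HB1.
exists pos', vis'; split.
  rewrite map_cons run_cons /stepo step_down ?anth // e; congr Some; congr (_, _, _).
  by rewrite /= -addn1 natrD; ring.
split.
- by rewrite s1.
- move=> b; rewrite s2 nth_set_nth /= inE.
  by case: eqP => [->|_]; case: (_ \in B).
- by apply: subset_trans s3; apply: subsetUr.
- move=> _; case: (B =P [::]) => [Bn|/eqP Bn]; last exact: s4.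
  move: e; rewrite Bn /run /= => -[_ <- _]; exact: setU11.
Qed.

Lemma map_fst_leaf (A : seq nat) (v : V) : [seq p.1 | p <- [seq (a, v) | a <- A]] = A.
Proof. by elim: A => //= a A ->. Qed.

Lemma anc_cases v x : anc v x -> x = v \/ exists2 c, c \in ch v & anc c x.
Proof.
move=> a; case: (eqVneq x v) => [->|ne]; first by left.
by right; apply: ch_exists.
Qed.

Lemma GG_leaf v : ch v = [::] -> GG v = 0.
Proof. by move=> e; rewrite GG_rec e big_nil. Qed.


Lemma perm_B_rest (avail B : seq nat) : uniq avail -> uniq B -> {subset B <= avail} ->
  perm_eq (B ++ [seq a <- avail | a \notin B]) avail.
Proof.
move=> uA uB sB; apply: uniq_perm => //.
  rewrite cat_uniq uB filter_uniq // andbT /=.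
  by apply/hasPn => x; rewrite mem_filter => /andP[].
move=> x; rewrite mem_cat mem_filter; case xB: (x \in B) => /=; last by [].
by rewrite sB.
Qed.

Lemma perm_ret (avail B : seq nat) a : uniq avail -> uniq B -> {subset B <= avail} -> a \in B ->
  perm_eq ([seq b <- B | b != a] ++ rcons [seq b <- avail | b \notin B] a) avail.
Proof.
move=> uA uB sB aB; apply: uniq_perm => //.
  rewrite cat_uniq rcons_uniq !filter_uniq // mem_filter aB /= andbT.
  apply/hasPn => x; rewrite mem_rcons inE mem_filter => /orP[/eqP->|/andP[xB _]].
    by rewrite mem_filter eqxx.
  by rewrite mem_filter (negbTE xB) andbF.
move=> x; rewrite mem_cat mem_rcons inE !mem_filter.
case: (eqVneq x a) => [->|xa] /=; first by rewrite (sB a aB).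
case xB: (x \in B) => /=; last by []. by rewrite (sB x xB).
Qed.

Lemma map_fst_filter (Fc : seq (nat * V)) a :
  [seq p.1 | p <- [seq p <- Fc | p.1 != a]] = [seq b <- [seq p.1 | p <- Fc] | b != a].
Proof. by rewrite filter_map. Qed.

Definition P1 v (A : seq nat) (S : seq (move V)) (F : seq (nat * V)) :=
  forall (pos : seq V) (vis : {set V}) (c0 : R), uniq A -> (forall a, a \in A -> (a < size pos)%N /\ nth r pos a = v) -> v \in vis ->
  perm_eq [seq p.1 | p <- F] A /\
  exists pos' vis', run (Some (pos, vis, c0)) S = Some (pos', vis', c0 + GG v) /\
  [/\ size pos' = size pos, (forall a, a \notin A -> nth r pos' a = nth r pos a),
      (forall a p, (a, p) \in F -> nth r pos' a = p), vis \subset vis' &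
      (forall x, anc v x -> x \in vis')].

Definition P2 v (cs : seq V) (avail : seq nat) (S : seq (move V)) (F : seq (nat * V)) :=
  (forall c, c \in cs -> c \in ch v) ->
  forall (pos : seq V) (vis : {set V}) (c0 : R), uniq avail -> (forall a, a \in avail -> (a < size pos)%N /\ nth r pos a = v) -> v \in vis ->
  perm_eq [seq p.1 | p <- F] avail /\
  exists pos' vis', run (Some (pos, vis, c0)) S = Some (pos', vis', c0 + \sum_(c <- cs) (hh c + GG c)) /\
  [/\ size pos' = size pos, (forall a, a \notin avail -> nth r pos' a = nth r pos a),
      (forall a p, (a, p) \in F -> nth r pos' a = p), vis \subset vis' &
      (forall x, has (fun c => anc c x) cs -> x \in vis')].

Lemma exec_CE v A S F : cost_expl r par w q K UL UC v A S F -> P1 v A S F.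
Proof.
move=> H; apply: (@ce_ind R V r par w q K UL UC P1 P2) H.
-
  move=> {}v {}A lf pos vis c0 uA HA vv; split; first by rewrite map_fst_leaf.
  have chv : ch v = [::] by move: lf; rewrite /is_leaf => /andP[_ /eqP].
  exists pos, vis; split; first by rewrite GG_leaf // addr0.
  split => //.
  + move=> a p /mapP[b bA [-> ->]]; exact: (HA b bA).2.
  + move=> x /anc_cases[->//|[c]]; by rewrite chv.
-
  move=> {}v {}A cs {}S {}F nlf pcs _ _ IH2 pos vis c0 uA HA vv.
  have memcs : forall c, c \in cs -> c \in ch v by move=> c; rewrite (perm_mem pcs).
  have [pF [pos' [vis' [e [s1 s2 s3 s4 s5]]]]] := IH2 memcs pos vis c0 uA HA vv.
  split => //; exists pos', vis'; split.
    by rewrite e GG_rec (perm_big _ pcs).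
  split => // x /anc_cases[->|[c cin ac]]; first by apply: (subsetP s4).
  by apply: s5; apply/hasP; exists c => //; rewrite (perm_mem pcs).
-
  move=> {}v avail _ pos vis c0 uA HA vv; split; first by rewrite map_fst_leaf.
  exists pos, vis; split; first by rewrite big_nil addr0.
  split => //.
  + move=> a p /mapP[b bA [-> ->]]; exact: (HA b bA).2.
- move=> {}v c cs avail B Sc Fc {}S {}F uB sB subB _ IH1 ncond _ IH2 mem pos vis c0 uA HA vv.
  have cin : c \in ch v by apply: mem; rewrite mem_head.
  have mem' : forall x, x \in cs -> x \in ch v by move=> x xs; apply: mem; rewrite inE xs orbT.
  have HB : forall a, a \in B -> (a < size pos)%N /\ nth r pos a = v.
    by move=> a' aB; apply: HA; exact: subB.
  have [pos1 [vis1 [e1 [s11 s12 s13 s14]]]] := @run_down B v c (ch_nr cin) (ch_par cin) pos vis c0 uB HB.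
  have Bn : B != [::] by rewrite -size_eq0 sB -lt0n Kpos.
  have cv1 : c \in vis1 := s14 Bn.
  have HB1 : forall a, a \in B -> (a < size pos1)%N /\ nth r pos1 a = c.
    by move=> a' aB; rewrite s11 s12 aB; split => //; exact: (HB a' aB).1.
  have [pF1 [pos2 [vis2 [e2 [s21 s22 s23 s24 s25]]]]] :=
    IH1 pos1 vis1 (c0 + (size B)%:R * w c) uB HB1 cv1.
  set avail' := [seq a <- avail | a \notin B].
  have uA' : uniq avail' by exact: filter_uniq.
  have HA' : forall a, a \in avail' -> (a < size pos2)%N /\ nth r pos2 a = v.
    move=> a'; rewrite mem_filter => /andP[aB aA].
    rewrite s21 s11 s22 // s12 (negbTE aB); exact: HA.
  have vv2 : v \in vis2 by apply: (subsetP s24); apply: (subsetP s13).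
  have [pF2 [pos3 [vis3 [e3 [s31 s32 s33 s34 s35]]]]] :=
    IH2 mem' pos2 vis2 (c0 + (size B)%:R * w c + GG c) uA' HA' vv2.
  split.
    rewrite map_cat; apply: perm_trans (perm_cat pF1 pF2) _; exact: perm_B_rest.
  exists pos3, vis3; split.
    rewrite !run_cat e1 e2 e3 big_cons; congr Some; congr (_, _, _).
    rewrite (hh_ch cin) sB.
    have -> : ret v c = false by apply: negbTE.
    by rewrite addr0 !addrA.
  split.
  - by rewrite s31 s21 s11.
  - move=> a' aA; have aB : a' \notin B by apply: contra aA; exact: subB.
    have aA' : a' \notin avail' by rewrite mem_filter (negbTE aA) andbF.
    by rewrite s32 // s22 // s12 (negbTE aB).
  - move=> a' p; rewrite mem_cat => /orP[aF|aF]; last exact: s33.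
    have aB : a' \in B by rewrite -(perm_mem pF1); apply/mapP; exists (a', p).
    have aA' : a' \notin avail' by rewrite mem_filter aB.
    by rewrite s32 // (s23 _ _ aF).
  - exact: subset_trans s13 (subset_trans s24 s34).
  - move=> x /orP[ax|hx]; last exact: s35.
    by apply: (subsetP s34); apply: s25 ax.
- move=> {}v c cs avail B Sc Fc a {}S {}F uB sB subB _ IH1 cond aF _ IH2 mem pos vis c0 uA HA vv.
  have cin : c \in ch v by apply: mem; rewrite mem_head.
  have mem' : forall x, x \in cs -> x \in ch v by move=> x xs; apply: mem; rewrite inE xs orbT.
  have HB : forall a, a \in B -> (a < size pos)%N /\ nth r pos a = v.
    by move=> a' aB; apply: HA; exact: subB.
  have [pos1 [vis1 [e1 [s11 s12 s13 s14]]]] := @run_down B v c (ch_nr cin) (ch_par cin) pos vis c0 uB HB.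
  have Bn : B != [::] by rewrite -size_eq0 sB -lt0n Kpos.
  have cv1 : c \in vis1 := s14 Bn.
  have HB1 : forall a, a \in B -> (a < size pos1)%N /\ nth r pos1 a = c.
    by move=> a' aB; rewrite s11 s12 aB; split => //; exact: (HB a' aB).1.
  have [pF1 [pos2 [vis2 [e2 [s21 s22 s23 s24 s25]]]]] :=
    IH1 pos1 vis1 (c0 + (size B)%:R * w c) uB HB1 cv1.
  have aB : a \in B by rewrite -(perm_mem pF1); apply/mapP; exists (a, UL c).
  have asz2 : (a < size pos2)%N by rewrite s21 s11; exact: (HB a aB).1.
  have an2 : nth r pos2 a = UL c := s23 a (UL c) aF.
  have ancv : exists2 k, (k <= #|V|)%N & iter k par (UL c) = v.
    have : anc v (UL c) := anc_trans (ch_anc cin) (ULsub (ch_nr cin)).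
    by move=> /existsP[k /eqP hk]; exists k => //; rewrite -ltnS; exact: ltn_ord k.
  have [pos3 [vis3 [e3 [s31 s32 s33]]]] :=
    @run_up #|V| a v (UL c) pos2 vis2 (c0 + (size B)%:R * w c + GG c) ancv asz2 an2.
  set avail' := rcons [seq b <- avail | b \notin B] a.
  have uA' : uniq avail'.
    by rewrite rcons_uniq filter_uniq // mem_filter aB.
  have HA' : forall b, b \in avail' -> (b < size pos3)%N /\ nth r pos3 b = v.
    move=> b; rewrite mem_rcons inE => /orP[/eqP->|].
      by rewrite s31 s32 eqxx.
    rewrite mem_filter => /andP[bB bA].
    have ba : b != a by apply: contra bB => /eqP->.
    rewrite s31 s32 (negbTE ba) s21 s11 s22 // s12 (negbTE bB); exact: HA.
  have vv3 : v \in vis3.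
    by apply: (subsetP s33); apply: (subsetP s24); apply: (subsetP s13).
  have [pF2 [pos4 [vis4 [e4 [s41 s42 s43 s44 s45]]]]] :=
    IH2 mem' pos3 vis3 (c0 + (size B)%:R * w c + GG c + (depth (UL c) - depth v)) uA' HA' vv3.
  split.
    rewrite map_cat map_fst_filter.
    apply: perm_trans (perm_cat (perm_filter _ pF1) pF2) _; exact: perm_ret.
  exists pos4, vis4; split.
    rewrite !run_cat e1 e2 e3 e4 big_cons; congr Some; congr (_, _, _).
    rewrite (hh_ch cin) sB.
    have -> : ret v c = true by [].
    ring.
  split.
  - by rewrite s41 s31 s21 s11.
  - move=> b bA; have bB : b \notin B by apply: contra bA; exact: subB.
    have ba : b != a by apply: contra bA => /eqP->; exact: subB.
    have bA' : b \notin avail' by rewrite mem_rcons inE (negbTE ba) mem_filter (negbTE bA) andbF.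
    by rewrite s42 // s32 (negbTE ba) s22 // s12 (negbTE bB).
  - move=> b p; rewrite mem_cat => /orP[bF|bF]; last exact: s43.
    move: bF; rewrite mem_filter => /andP[/= ba bF].
    have bB : b \in B by rewrite -(perm_mem pF1); apply/mapP; exists (b, p).
    have bA' : b \notin avail' by rewrite mem_rcons inE (negbTE ba) mem_filter bB.
    by rewrite s42 // s32 (negbTE ba) (s23 _ _ bF).
  - exact: subset_trans s13 (subset_trans s24 (subset_trans s33 s44)).
  - move=> x /orP[ax|hx]; last exact: s45.
    by apply: (subsetP s44); apply: (subsetP s33); apply: s25 ax.
Qed.


Lemma size_filter_notin (avail B : seq nat) : uniq avail -> uniq B -> {subset B <= avail} ->
  size [seq a <- avail | a \notin B] = (size avail - size B)%N.
Proof.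
move=> uA uB sB; have := perm_size (perm_B_rest uA uB sB).
by rewrite size_cat => <-; rewrite addKn.
Qed.

Lemma ret_eq_dlt v c u0 : c \in ch v -> UC v = Some u0 -> c != u0 -> ret v c = dlt v c.
Proof.
move=> cin UCv cu; rewrite /ret /dlt UCv.
have -> : (Some c != Some u0) = true by apply/eqP => -[e]; move: cu; rewrite e eqxx.
case cn: (cnd v c); rewrite ?andbF // andbT /=.
apply/esym/eqP; apply: contraTeq cn => K1.
rewrite (cndE cin) -ltNge; apply: Kfar cin _.
by have := Kpos c; move: K1; lia.
Qed.

Lemma leq_sum_mem (s : seq V) (F : V -> nat) x : x \in s -> (F x <= \sum_(y <- s) F y)%N.
Proof.
elim: s => [//|y s IH]; rewrite inE big_cons => /orP[/eqP->|xs]; first exact: leq_addr.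
exact: leq_trans (IH xs) (leq_addl _ _).
Qed.

Lemma last_cons_ne (x y : V) (cs : seq V) : cs != [::] -> last x cs = last y cs.
Proof. by case: cs. Qed.

Lemma exists_EC v u0 (IH : forall c, c \in ch v -> forall A, uniq A -> size A = K c ->
     exists S F, cost_expl r par w q K UL UC c A S F /\
       (c != r -> exists2 a, a \in A & (a, UL c) \in F)) :
  UC v = Some u0 ->
  forall cs avail, uniq avail -> (\sum_(c <- cs) (K c - ret v c) <= size avail)%N ->
  (forall c, c \in cs -> c \in ch v) -> (cs != [::] -> last v cs = u0) ->
  exists S F, expl_children r par w q K UL UC v cs avail S F /\
    (cs != [::] -> exists2 a, a \in avail & (a, UL u0) \in F).
Proof.
move=> UCv; elim=> [|c cs IHl] avail uA hsz mem hl.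
  by exists [::], [seq (a, v) | a <- avail]; split => //; constructor.
have cin : c \in ch v by apply: mem; rewrite mem_head.
have mem' : forall x, x \in cs -> x \in ch v by move=> x xs; apply: mem; rewrite inE xs orbT.
move: hsz; rewrite big_cons => hsz.
have retu : ret v u0 = false by rewrite /ret UCv eqxx.
have Kc := Kpos c.
have hl' : cs != [::] -> last v cs = u0.
  by move=> ne; rewrite -(hl isT) /= (last_cons_ne c v ne).
have szB : (K c <= size avail)%N.
  case rt: (ret v c); last by move: hsz; rewrite rt subn0; lia.
  have K1 : K c = 1%N by have := ret_dlt cin rt; rewrite /dlt => /andP[/eqP].
  have cu : c != u0 by apply: contraTneq rt => ->; rewrite retu.
  have u0cs : u0 \in cs.
    have := mem_last c cs; rewrite -[last c cs]/(last v (c :: cs)) (hl isT) inE.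
    by rewrite eq_sym (negbTE cu).
  have := leq_sum_mem (fun x => K x - ret v x)%N u0cs.
  rewrite /= retu K1 subn0; have := Kpos u0; move: hsz; rewrite rt K1 subnn add0n => h1 h2 h3; exact: leq_trans h2 (leq_trans h3 h1).
set B := take (K c) avail.
have uB : uniq B by exact: take_uniq.
have sB : size B = K c by rewrite size_takel.
have subB : {subset B <= avail} by move=> x; exact: mem_take.
have [Sc [Fc [CEc [a aB aF]]]] : exists Sc Fc, cost_expl r par w q K UL UC c B Sc Fc /\
    exists2 a, a \in B & (a, UL c) \in Fc.
  have [Sc [Fc [h1 h2]]] := IH c cin B uB sB.
  by exists Sc, Fc; split => //; apply: h2; exact: ch_nr cin.
have sz' := size_filter_notin uA uB subB.
case rt: (ret v c).
  have K1 : K c = 1%N by have := ret_dlt cin rt; rewrite /dlt => /andP[/eqP].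
  set avail'' := rcons [seq b <- avail | b \notin B] a.
  have uA'' : uniq avail'' by rewrite rcons_uniq filter_uniq // mem_filter aB.
  have hsz'' : (\sum_(x <- cs) (K x - ret v x) <= size avail'')%N.
    by rewrite size_rcons sz' sB; move: hsz szB; rewrite rt K1 subnn add0n => h1 h2; rewrite subn1 prednK.
  have [S' [F' [EC' P']]] := IHl avail'' uA'' hsz'' mem' hl'.
  exists ([seq Step b c | b <- B] ++ Sc ++ up_moves par #|V| a (UL c) v ++ S'),
         ([seq p <- Fc | p.1 != a] ++ F'); split.
    exact: EC_ret uB sB subB CEc rt aF EC'.
  move=> _.
  have cu : c != u0 by apply: contraTneq rt => ->; rewrite retu.
  have csn : cs != [::].
    by apply: contra cu => /eqP e; move: (hl isT); rewrite e /= => ->.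
  have [a' a'A a'F] := P' csn.
  exists a'; last by rewrite mem_cat a'F orbT.
  move: a'A; rewrite mem_rcons inE => /orP[/eqP->|]; first exact: subB.
  by rewrite mem_filter => /andP[].
set avail' := [seq b <- avail | b \notin B].
have uA' : uniq avail' by exact: filter_uniq.
have hsz' : (\sum_(x <- cs) (K x - ret v x) <= size avail')%N.
  by rewrite sz' sB leq_subRL //; move: hsz; rewrite rt subn0.
have [S' [F' [EC' P']]] := IHl avail' uA' hsz' mem' hl'.
exists ([seq Step b c | b <- B] ++ Sc ++ S'), (Fc ++ F'); split.
  by apply: EC_noret uB sB subB CEc _ EC'; rewrite /ret in rt; rewrite rt.
move=> _; case: (eqVneq cs [::]) => [e|ne].
  have cu0 : c = u0 by move: (hl isT); rewrite e.
  by exists a; [exact: subB | rewrite mem_cat -cu0 aF].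
have [a' a'A a'F] := P' ne.
exists a'; last by rewrite mem_cat a'F orbT.
by move: a'A; rewrite mem_filter => /andP[].
Qed.

Lemma exists_CE v : forall A, uniq A -> size A = K v ->
  exists S F, cost_expl r par w q K UL UC v A S F /\
    (v != r -> exists2 a, a \in A & (a, UL v) \in F).
Proof.
elim/tree_ind: v => v IH A uA sA.
case lf: (is_leaf r par v).
  exists [::], [seq (a, v) | a <- A]; split; first exact: CE_leaf.
  move=> vr; have chv : ch v = [::] by move: lf; rewrite /is_leaf => /andP[_ /eqP].
  have [-> K1] := leafUL chv vr.
  move: sA; rewrite K1; case: A {uA} => [//|a A] _.
  by exists a; rewrite ?mem_head //= inE eqxx.
case: (eqVneq (ch v) [::]) => [chv|ne].
  exists [::], [seq (a, v) | a <- A]; split.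
    apply: (@CE_node R V r par w q K UL UC v A [::]); first by rewrite lf.
    - by rewrite chv.
    - by left.
    - exact: EC_nil.
  by move=> vr; move: lf; rewrite /is_leaf vr chv eqxx.
have [u0 u0in [UCv umax ULv]] := UCspec ne.
set cs := rcons (rem u0 (ch v)) u0.
have pcs : perm_eq cs (ch v).
  by rewrite /cs perm_rcons perm_sym; exact: perm_to_rem.
have lcs : last v cs = u0 by rewrite /cs last_rcons.
have memcs : forall c, c \in cs -> c \in ch v by move=> c; rewrite (perm_mem pcs).
have need : (\sum_(c <- cs) (K c - ret v c) <= size A)%N.
  have retu : ret v u0 = false by rewrite /ret UCv eqxx.
  rewrite (perm_big _ pcs) sA Klab (bigD1_seq u0) ?ch_uniq //=.
  rewrite [X in (_ <= maxn 1 X)%N](bigD1_seq u0) ?ch_uniq //= retu subn0.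
  have E : (\sum_(c <- ch v | c != u0) (K c - ret v c) = \sum_(c <- ch v | c != u0) (K c - dlt v c))%N.
    rewrite big_seq_cond [RHS]big_seq_cond; apply: eq_bigr => c /andP[cin cu].
    by rewrite (ret_eq_dlt cin UCv cu).
  rewrite E.
  case dl: (dlt v u0); last by rewrite subn0 leq_maxr.
  have all0 : (\sum_(c <- ch v | c != u0) (K c - dlt v c) = 0)%N.
    rewrite big_seq_cond big1 // => c /andP[cin _].
    have cn : cnd v c.
      rewrite (cndE cin); apply: le_trans (_ : depth (UL u0) - depth v <= _).
        by have := umax c cin; rewrite !dUL.
      by move: dl; rewrite /dlt (cndE u0in) => /andP[].
    have K1 : K c = 1%N.
      apply/eqP; rewrite eqn_leq Kpos andbT leqNgt; apply/negP => K2.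
      by move: cn; rewrite (cndE cin) leNgt (Kfar cin K2).
    by rewrite /dlt K1 cn subnn.
  have Ku : K u0 = 1%N by move: dl; rewrite /dlt => /andP[/eqP].
  by rewrite all0 Ku addn0 leq_maxl.
have [S [F [EC P]]] := exists_EC IH UCv uA need memcs (fun _ => lcs).
exists S, F; split.
  apply: (@CE_node R V r par w q K UL UC v A cs) => //; first by rewrite lf.
  by right; rewrite lcs.
move=> _; rewrite ULv; apply: P.
by rewrite /cs; case: (rem u0 (ch v)).
Qed.



Lemma run_invokes k : forall pos vis c, run (Some (pos, vis, c)) (nseq k (@Invoke V)) =
  Some (pos ++ nseq k r, if k == 0%N then vis else r |: vis, c + k%:R * q).
Proof.
elim: k => [|k IH] pos vis c.
  by rewrite /run /= cats0 mul0r addr0.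
rewrite -[nseq k.+1 _]/(@Invoke V :: nseq k (@Invoke V)) run_cons.
have -> : stepo (Some (pos, vis, c)) (@Invoke V) = Some (rcons pos r, r |: vis, c + q) by [].
rewrite IH; congr Some; congr (_, _, _).
- by rewrite cat_rcons.
- by case: k {IH} => //= k; rewrite setUA setUid.
- by rewrite -[k.+1]addn1 natrD; ring.
Qed.

Lemma main_result :
  (exists S, is_CostExpl r par w q K UL UC S) /\
  (forall S, is_CostExpl r par w q K UL UC S ->
     explores r par w q S /\ cost_optimal r par w q S).
Proof.
split.
  have [S0 [F [CE _]]] := exists_CE (iota_uniq 0 (K r)) (size_iota 0 (K r)).
  by exists (nseq (K r) (@Invoke V) ++ S0), S0, F.
move=> S [S0 [F [CE ->]]].
have Kr := Kpos r.
have HA : forall a, a \in iota 0 (K r) -> (a < size (nseq (K r) r))%N /\ nth r (nseq (K r) r) a = r.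
  by move=> a; rewrite mem_iota add0n => /andP[_ aK]; rewrite size_nseq nth_nseq aK.
have PCE := exec_CE CE.
have [_ [pos' [vis' [e [s1 s2 s3 s4 s5]]]]] :=
  PCE (nseq (K r) r) (r |: set0) (0 + (K r)%:R * q) (iota_uniq 0 (K r)) HA (setU11 _ _).
have Kr0 : (K r == 0%N) = false by rewrite eqn0Ngt Kr.
have hexec : exec r par w q (nseq (K r) (@Invoke V) ++ S0) = Some (pos', vis', 0 + (K r)%:R * q + GG r).
  by rewrite exec_run run_cat run_invokes cat0s Kr0 e.
have visT : vis' = setT by apply/setP => x; rewrite inE; apply: s5; exact: anc_root.
have expl : explores r par w q (nseq (K r) (@Invoke V) ++ S0).
  by exists pos', (0 + (K r)%:R * q + GG r); rewrite hexec visT.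
split => //; split => // S' [pos [c he]].
rewrite /cost he hexec.
have := inv_run Inv0 (he : run _ S' = _).
case => _ _ H0 Hc.
have szp : (0 < size pos)%N.
  rewrite lt0n; apply/negP => /eqP h; have := H0 h.
  by move/setP/(_ r); rewrite !inE.
have Nr : Nc pos r = size pos.
  by rewrite /Nc (@eq_count _ _ predT) ?count_predT // => x; exact: anc_root.
have := Lb (pos := pos) (v := r); rewrite Nr => /(_ szp).
have -> : DD r = q by rewrite /DD depth_r add0r.
have -> : inner pos r = \sum_(u | u != r) w u * Fv pos setT u.
  rewrite /inner; apply: eq_big => u; first by rewrite anc_root.
  by move=> _; rewrite /Fv /fN inE.
lra.
Qed.

End Main.

Unset Implicit Arguments.

Theorem theorem2 (R : realFieldType) (V : finType) (r : V) (par : V -> V)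
  (w : V -> R) (q : R)
  (Htree : is_rooted_tree r par)
  (Hw : forall v : V, v != r -> 0 < w v)
  (Hchild : forall v : V, v != r -> size (children r par v) != 1%N)
  (Hq : 0 <= q)
  (K : V -> nat) (UL : V -> V) (UC : V -> option V)
  (Hlab : is_labeling r par w q K UL UC) :
  (exists S, is_CostExpl r par w q K UL UC S) /\
  (forall S, is_CostExpl r par w q K UL UC S ->
     explores r par w q S /\ cost_optimal r par w q S).
Proof.
exact: (main_result Htree Hw Hq Hlab).
Qed.
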